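(* Run APAPC with $\eta=\frac1{4\tau L}$, $\theta=\frac1{\eta\lambda_{\max}(\mathbf{W})}$, $\alpha=\mu$, $\tau=\min\left\{1,\frac12\sqrt{\frac\mu L\frac{\lambda_{\max}(\mathbf{W})}{\lambda_{\min}^+(\mathbf{W})}}\right\}$, and define \[ \Psi^k := \frac1\eta\|x^k-x^*\|^2 + \Big\langle \big(\tfrac1\theta\mathbf{W}^\dagger - (1+\eta\alpha)^{-1}\eta\mathbf{I}\big)(y^k-y^* ),\,y^k-y^*\Big\rangle + \frac{2(1-\tau)}{\tau}\mathrm{D}_F(x_f^k,x^* ). \] Then for every $k\ge0$, \[ \Psi^{k+1}\le\left(1+\frac14\min\left\{\sqrt{\frac\mu L\frac{\lambda_{\min}^+(\mathbf{W})}{\lambda_{\max}(\mathbf{W})}},\ \frac{\lambda_{\min}^+(\mathbf{W})}{\lambda_{\max}(\mathbf{W})}\right\}\right)^{-1}\Psi^k. \]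
   Context: $F:\mathbb{R}^{nd}\to\mathbb{R}$ is differentiable, $\mu$-strongly convex and $L$-smooth, $0<\mu\le L$. $\mathbf{W}$ is a symmetric positive semidefinite $nd\times nd$ matrix whose kernel is the consensus space $\{(x_1,\dots,x_n)\in(\mathbb{R}^d)^n:x_1=\dots=x_n\}$, with largest eigenvalue $\lambda_{\max}(\mathbf{W})$ and smallest positive eigenvalue $\lambda_{\min}^+(\mathbf{W})$. $\mathbf{W}^\dagger$ is the inverse of $\mathbf{W}$ restricted to $\mathrm{range}(\mathbf{W})$. $x^*$ is the unique minimizer of $F$ over $\ker(\mathbf{W})$, $y^*:=-\nabla F(x^* )\in\mathrm{range}(\mathbf{W})$. $\mathrm{D}_F(u,v):=F(u)-F(v)-\langle\nabla F(v),u-v\rangle$. APAPC: given $x^0\in\mathbb{R}^{nd}$, $y^0\in\mathrm{range}(\mathbf{W})$, parameters $\eta,\theta,\alpha>0$, $\tau\in(0,1]$, set $x_f^0=x^0$ and for $k\ge0$: $x_g^k=\tau x^k+(1-\tau)x_f^k$; $x^{k+1/2}=(1+\eta\alpha)^{-1}(x^k-\eta(\nabla F(x_g^k)-\alpha x_g^k+y^k))$; $y^{k+1}=y^k+\theta\mathbf{W}x^{k+1/2}$; $x^{k+1}=(1+\eta\alpha)^{-1}(x^k-\eta(\nabla F(x_g^k)-\alpha x_g^k+y^{k+1}))$; $x_f^{k+1}=x_g^k+\frac{2\tau}{2-\tau}(x^{k+1}-x^k)$. *)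

(* Defs.v *)
From HB Require Import structures.
From mathcomp Require Import all_boot all_order all_algebra.
From mathcomp Require Import reals.
Set Implicit Arguments. Unset Strict Implicit. Unset Printing Implicit Defensive.
Import Order.TTheory GRing.Theory Num.Theory.
Local Open Scope ring_scope.

Section APAPC.
Variables (R : realType) (N : nat).
(* Vectors of R^N are column vectors 'cV[R]_N, with N = n*d. *)

Definition dotv (u v : 'cV[R]_N) : R := (u^T *m v) 0 0.
Definition sqnorm (u : 'cV[R]_N) : R := dotv u u.
Definition normv (u : 'cV[R]_N) : R := Num.sqrt (sqnorm u).

Definition has_gradient (F : 'cV[R]_N -> R) (g : 'cV[R]_N -> 'cV[R]_N) :=
  forall x (eps : R), 0 < eps -> exists2 delta : R, 0 < delta &
    forall h, normv h < delta ->
      `|F (x + h) - F x - dotv (g x) h| <= eps * normv h.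

Definition strongly_convex (F : 'cV[R]_N -> R) (g : 'cV[R]_N -> 'cV[R]_N) (mu : R) :=
  forall x y, F x + dotv (g x) (y - x) + mu / 2 * sqnorm (y - x) <= F y.

Definition smooth (g : 'cV[R]_N -> 'cV[R]_N) (L : R) :=
  forall x y, normv (g x - g y) <= L * normv (x - y).

Definition bregman (F : 'cV[R]_N -> R) (g : 'cV[R]_N -> 'cV[R]_N) (u v : 'cV[R]_N) :=
  F u - F v - dotv (g v) (u - v).

Definition in_ker (W : 'M[R]_N) (x : 'cV[R]_N) := W *m x = 0.
Definition in_range (W : 'M[R]_N) (u : 'cV[R]_N) := exists z, u = W *m z.

Record state := State { st_x : 'cV[R]_N; st_y : 'cV[R]_N; st_xf : 'cV[R]_N }.

Definition apapc_step (gradF : 'cV[R]_N -> 'cV[R]_N) (W : 'M[R]_N)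
    (eta theta alpha tau : R) (s : state) : state :=
  let x := st_x s in let y := st_y s in let xf := st_xf s in
  let xg := tau *: x + (1 - tau) *: xf in
  let xh := (1 + eta * alpha)^-1 *: (x - eta *: (gradF xg - alpha *: xg + y)) in
  let y' := y + theta *: (W *m xh) in
  let x' := (1 + eta * alpha)^-1 *: (x - eta *: (gradF xg - alpha *: xg + y')) in
  let xf' := xg + (2 * tau / (2 - tau)) *: (x' - x) in
  State x' y' xf'.

Fixpoint apapc (gradF : 'cV[R]_N -> 'cV[R]_N) (W : 'M[R]_N)
    (eta theta alpha tau : R) (x0 y0 : 'cV[R]_N) (k : nat) : state :=
  match k with
  | 0 => State x0 y0 x0
  | k'.+1 => apapc_step gradF W eta theta alpha tau
               (apapc gradF W eta theta alpha tau x0 y0 k')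
  end.

(* Lyapunov function Psi^k; Wdag is the inverse of W restricted to range(W). *)
Definition Psi (F : 'cV[R]_N -> R) (gradF : 'cV[R]_N -> 'cV[R]_N)
    (Wdag : 'M[R]_N) (eta theta alpha tau : R) (xs ys : 'cV[R]_N) (s : state) : R :=
  let dy := st_y s - ys in
  1 / eta * sqnorm (st_x s - xs)
  + dotv ((theta^-1 *: Wdag - ((1 + eta * alpha)^-1 * eta) *: 1%:M) *m dy) dy
  + 2 * (1 - tau) / tau * bregman F gradF (st_xf s) xs.

End APAPC.

(* Consensus space of (R^d)^n, vectors of R^(n*d) indexed by mxvec_index i j
   (i : node, j : coordinate). *)
Definition consensus (R : realType) (n d : nat) (x : 'cV[R]_(n * d)) :=
  forall (i i' : 'I_n) (j : 'I_d), x (mxvec_index i j) 0 = x (mxvec_index i' j) 0.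

(* Main.v *)
Require Import Defs.
From HB Require Import structures.
From mathcomp Require Import all_boot all_order all_algebra.
From mathcomp Require Import reals.
From mathcomp Require Import complex sesquilinear spectral.
From mathcomp Require Import ring lra.
Import Order.TTheory GRing.Theory Num.Theory.
Local Open Scope ring_scope.
Set Implicit Arguments. Unset Strict Implicit.
Section Dot.
Variables (R : realType) (N : nat).
Implicit Types (u v w : 'cV[R]_N) (a b : R).

Lemma dotvE u v : dotv u v = \sum_i u i 0 * v i 0.
Proof. by rewrite /dotv mxE; apply: eq_bigr => i _; rewrite mxE. Qed.

Lemma dotvC u v : dotv u v = dotv v u.
Proof. by rewrite !dotvE; apply: eq_bigr => i _; rewrite mulrC. Qed.

Lemma dotvDl u v w : dotv (u + v) w = dotv u w + dotv v w.
Proof. by rewrite !dotvE -big_split; apply: eq_bigr => i _; rewrite mxE mulrDl. Qed.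

Lemma dotvDr u v w : dotv w (u + v) = dotv w u + dotv w v.
Proof. by rewrite dotvC dotvDl !(dotvC w). Qed.

Lemma dotvZl a u v : dotv (a *: u) v = a * dotv u v.
Proof. by rewrite !dotvE mulr_sumr; apply: eq_bigr => i _; rewrite mxE mulrA. Qed.

Lemma dotvZr a u v : dotv v (a *: u) = a * dotv v u.
Proof. by rewrite dotvC dotvZl dotvC. Qed.

Lemma dotvNl u v : dotv (- u) v = - dotv u v.
Proof. by rewrite -scaleN1r dotvZl mulN1r. Qed.

Lemma dotvNr u v : dotv v (- u) = - dotv v u.
Proof. by rewrite dotvC dotvNl dotvC. Qed.

Lemma dotvBl u v w : dotv (u - v) w = dotv u w - dotv v w.
Proof. by rewrite dotvDl dotvNl. Qed.

Lemma dotvBr u v w : dotv w (u - v) = dotv w u - dotv w v.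
Proof. by rewrite dotvDr dotvNr. Qed.

Lemma dotv0l v : dotv 0 v = 0.
Proof. by rewrite dotvE big1 // => i _; rewrite mxE mul0r. Qed.

Lemma dotv0r v : dotv v 0 = 0.
Proof. by rewrite dotvC dotv0l. Qed.

Lemma dotvv_ge0 u : 0 <= dotv u u.
Proof. by rewrite dotvE sumr_ge0 // => i _; rewrite -expr2 sqr_ge0. Qed.

Lemma dotvv_eq0 u : dotv u u = 0 -> u = 0.
Proof.
rewrite dotvE => /eqP; rewrite psumr_eq0 => [/allP H|i _]; last by rewrite -expr2 sqr_ge0.
apply/matrixP => i j; rewrite ord1 mxE.
by have /implyP := H i (mem_index_enum _); rewrite -expr2 sqrf_eq0 => /(_ isT)/eqP.
Qed.

Lemma dotv_mul u v (W : 'M[R]_N) : W^T = W -> dotv u (W *m v) = dotv (W *m u) v.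
Proof. by move=> HW; rewrite /dotv trmx_mul HW mulmxA. Qed.

Lemma dotv_young u v : 2 * dotv u v <= dotv u u + dotv v v.
Proof.
have := dotvv_ge0 (u - v).
rewrite !dotvBl !dotvBr (dotvC v u); lra.
Qed.

Lemma sq_add2 u v : dotv (u + v) (u + v) <= 2 * dotv u u + 2 * dotv v v.
Proof.
have := dotv_young u v.
rewrite !dotvDl !dotvDr (dotvC v u); lra.
Qed.

Lemma dotv_cs u v : dotv u v <= normv u * normv v.
Proof.
rewrite /normv /sqnorm.
have Hu := dotvv_ge0 u; have Hv := dotvv_ge0 v.
have [a0|a0] := eqVneq (dotv u u) 0.
  by rewrite a0 sqrtr0 mul0r (dotvv_eq0 a0) dotv0l.
have [b0|b0] := eqVneq (dotv v v) 0.
  by rewrite b0 sqrtr0 mulr0 (dotvv_eq0 b0) dotv0r.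
set a := dotv u u in Hu a0 *; set b := dotv v v in Hv b0 *.
have sa : 0 < Num.sqrt a by rewrite sqrtr_gt0 lt_neqAle eq_sym a0.
have sb : 0 < Num.sqrt b by rewrite sqrtr_gt0 lt_neqAle eq_sym b0.
have := dotv_young ((Num.sqrt a)^-1 *: u) ((Num.sqrt b)^-1 *: v).
rewrite !dotvZl !dotvZr -/a -/b.
have ha : a = Num.sqrt a * Num.sqrt a by rewrite -expr2 sqr_sqrtr.
have hb : b = Num.sqrt b * Num.sqrt b by rewrite -expr2 sqr_sqrtr.
have -> : (Num.sqrt a)^-1 * ((Num.sqrt a)^-1 * a) = 1.
  by rewrite {3}ha; field; rewrite gt_eqF.
have -> : (Num.sqrt b)^-1 * ((Num.sqrt b)^-1 * b) = 1.
  by rewrite {3}hb; field; rewrite gt_eqF.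
move=> H.
have sab : 0 < Num.sqrt a * Num.sqrt b by apply: mulr_gt0.
rewrite -subr_ge0.
have -> : Num.sqrt a * Num.sqrt b - dotv u v =
   (Num.sqrt a * Num.sqrt b) * (1 - (Num.sqrt a)^-1 * ((Num.sqrt b)^-1 * dotv u v)).
  by field; rewrite !gt_eqF.
apply: mulr_ge0; first exact: ltW.
lra.
Qed.
End Dot.

Section Convex.
Variables (R : realType) (N : nat).
Variables (F : 'cV[R]_N -> R) (g : 'cV[R]_N -> 'cV[R]_N) (mu L : R).
Hypothesis mu0 : 0 < mu.
Hypothesis L0 : 0 < L.
Hypothesis hsc : strongly_convex F g mu.
Hypothesis hsm : smooth g L.
Implicit Types (u v x y : 'cV[R]_N).

Lemma convex1 x y : F x + dotv (g x) (y - x) <= F y.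
Proof.
apply: le_trans (hsc x y); rewrite lerDl; apply: mulr_ge0.
  by apply: divr_ge0 => //; apply: ltW.
exact: dotvv_ge0.
Qed.

Lemma normvZ (t : R) u : 0 <= t -> normv (t *: u) = t * normv u.
Proof.
move=> t0; rewrite /normv /sqnorm dotvZl dotvZr mulrA sqrtrM ?mulr_ge0 //.
  by rewrite -expr2 sqrtr_sqr ger0_norm.
Qed.

Lemma normv_ge0 u : 0 <= normv u.
Proof. exact: sqrtr_ge0. Qed.

Lemma normv_sq u : normv u * normv u = sqnorm u.
Proof. by rewrite -expr2 sqr_sqrtr //; apply: dotvv_ge0. Qed.

Lemma descent_m x h (m : nat) : (0 < m)%N ->
  F (x + h) <= F x + dotv (g x) h + L * sqnorm h * (m.+1%:R / (2 * m%:R)).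
Proof.
move=> m0.
have mR : 0 < m%:R :> R by rewrite ltr0n.
pose p (k : nat) := x + (k%:R / m%:R) *: h.
suff H : forall k, F (p k) <= F x + (k%:R / m%:R) * dotv (g x) h
           + L * sqnorm h * ((k%:R * k.+1%:R) / (2 * m%:R * m%:R)).
  have := H m; rewrite /p divff ?gt_eqF // scale1r mul1r.
  have -> : (m%:R * m.+1%:R / (2 * m%:R * m%:R)) = m.+1%:R / (2 * m%:R) :> R.
    by field; rewrite gt_eqF.
  by [].
elim=> [|k IH].
  by rewrite /p !(mul0r, mulr0, scale0r, addr0, mul0rn).
have c1 := convex1 (p k.+1) (p k).
have e1 : p k - p k.+1 = - (m%:R^-1 *: h).
  rewrite /p opprD addrACA subrr add0r -scalerBl -scaleNr; congr (_ *: _).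
  rewrite -natr1; field; rewrite gt_eqF //.
rewrite e1 dotvNr in c1.
have e2 : g (p k.+1) = g x + (g (p k.+1) - g x) by rewrite addrC subrK.
rewrite e2 dotvDl dotvZr dotvZr in c1.
have cs := @dotv_cs R N (g (p k.+1) - g x) h.
have sm := hsm (p k.+1) x.
have e3 : p k.+1 - x = (k.+1%:R / m%:R) *: h by rewrite /p addrC addKr.
rewrite e3 normvZ in sm; last by apply: divr_ge0; apply: ler0n.
have nh := normv_ge0 h.
have ng := normv_ge0 (g (p k.+1) - g x).
have b1 : dotv (g (p k.+1) - g x) h <= L * (k.+1%:R / m%:R * normv h) * normv h.
  apply: le_trans cs _; apply: ler_wpM2r => //.
rewrite mulrA -(mulrA _ _ (normv h)) normv_sq in b1.
set A := dotv (g (p k.+1) - g x) h in c1 b1.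
set B := dotv (g x) h in c1 IH *.
set S := sqnorm h in b1 IH *.
have S0 : 0 <= S by apply: dotvv_ge0.
set Fk := F (p k) in c1 IH; set Fk1 := F (p k.+1) in c1 *.
have key : Fk1 <= Fk + m%:R^-1 * B + m%:R^-1 * A by lra.
apply: (le_trans key).
have hA : m%:R^-1 * A <= m%:R^-1 * (L * (k.+1%:R / m%:R) * S).
  by apply: ler_wpM2l => //; rewrite invr_ge0 ltW.
have LS : 0 <= L * S by apply: mulr_ge0 => //; apply: ltW.
have -> : (k.+1%:R / m%:R) * B = (k%:R / m%:R) * B + m%:R^-1 * B.
  by rewrite -natr1; field; rewrite gt_eqF.
have -> : L * S * (k.+1%:R * k.+2%:R / (2 * m%:R * m%:R)) =
   L * S * (k%:R * k.+1%:R / (2 * m%:R * m%:R)) + m%:R^-1 * (L * (k.+1%:R / m%:R) * S).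
  rewrite -[k.+2]addn1 -[k.+1]addn1 !natrD; field; rewrite gt_eqF //.
lra.
Qed.

Lemma descent x h : F (x + h) <= F x + dotv (g x) h + L / 2 * sqnorm h.
Proof.
set E := F (x + h) - F x - dotv (g x) h.
set K := L / 2 * sqnorm h.
have K0 : 0 <= K by apply: mulr_ge0; [apply: divr_ge0; apply: ltW | apply: dotvv_ge0].
suff : E <= K by rewrite /E; lra.
rewrite leNgt; apply/negP => EK.
have d0 : 0 < E - K by rewrite subr_gt0.
set m := Num.Def.archi_bound (K / (E - K)).
have hm := archi_boundP (divr_ge0 K0 (ltW d0)).
rewrite -/m in hm.
have m0 : (0 < m)%N.
  by rewrite -(ltr0n R); apply: le_lt_trans hm; apply: divr_ge0 => //; apply: ltW.
have := descent_m x h m0.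
have mR : 0 < m%:R :> R by rewrite ltr0n.
have -> : L * sqnorm h * (m.+1%:R / (2 * m%:R)) = K + K / m%:R.
  by rewrite /K -natr1; field; rewrite gt_eqF.
move=> H.
have : K / (E - K) * (E - K) < m%:R * (E - K) by rewrite ltr_pM2r.
rewrite mulfVK ?gt_eqF // => H2.
have : E <= K + K / m%:R by rewrite /E; lra.
rewrite -lerBlDl ler_pdivlMr //.
lra.
Qed.

Lemma cocoercive u v :
  sqnorm (g u - g v) / (2 * L) <= F u - F v - dotv (g v) (u - v).
Proof.
set d := g u - g v.
set w := u - L^-1 *: d.
have h1 := descent u (- (L^-1 *: d)).
have h2 := convex1 v w.
rewrite -/(w) in h1.
rewrite /sqnorm !dotvNl !dotvNr ?opprK !dotvZl !dotvZr in h1.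
have e : w - v = (u - v) - L^-1 *: d by rewrite /w addrAC.
rewrite e dotvBr dotvZr in h2.
have e2 : dotv (g u) d = dotv (g v) d + dotv d d.
  by rewrite /d !dotvBl !dotvBr (dotvC (g v) (g u)); ring.
rewrite e2 in h1.
rewrite /sqnorm.
set a := dotv d d in h1 *; set b := dotv (g v) d in h1 h2.
have -> : a / (2 * L) = L / 2 * (L^-1 * (L^-1 * a)) .
  by field; rewrite gt_eqF.
have -> : L / 2 * (L^-1 * (L^-1 * a)) = L^-1 * a - L^-1 * a / 2.
  by field; rewrite gt_eqF.
have e3 : L / 2 * (L^-1 * (L^-1 * a)) = L^-1 * a / 2.
  by field; rewrite gt_eqF.
rewrite e3 in h1.
lra.
Qed.

End Convex.
Section Spectral.
Variables (R : realType) (N : nat) (W : 'M[R]_N).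
Hypothesis Wsym : W^T = W.
Local Notation C := (R[i]).
Local Notation toC := (real_complex R).

Let Wc : 'M[C]_N := map_mx toC W.

Lemma Wc_herm : Wc \is hermsymmx.
Proof.
apply: realsym_hermsym.
  apply/is_hermitianmxP; rewrite expr0 scale1r map_mx_id // /Wc.
  by rewrite map_trmx Wsym.
apply/mxOverP => i j; rewrite mxE; apply/complex_realP; eexists; reflexivity.
Qed.

Let P := spectralmx Wc.
Let X := spectral_diag Wc.

Lemma PU : P \is unitarymx.
Proof. exact: spectral_unitarymx. Qed.

Lemma Punit : P \in unitmx.
Proof. exact: spectral_unit. Qed.

Lemma hWc : Wc = invmx P *m diag_mx X *m P.
Proof. by apply/orthomx_spectralP/hermitian_normalmx/Wc_herm. Qed.

Lemma PWc : P *m Wc = diag_mx X *m P.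
Proof. by rewrite hWc !mulmxA mulmxV ?Punit // mul1mx. Qed.

Lemma Xreal i : X 0 i \is Num.real.
Proof. by have /mxOverP := hermitian_spectral_diag_real Wc_herm; apply. Qed.


Definition zc (v : 'cV[R]_N) := P *m map_mx toC v.

Lemma iter_P (v : 'cV[R]_N) a :
  P *m map_mx toC (iter a (mulmx W) v) = \col_i (X 0 i ^+ a * zc v i 0).
Proof.
elim: a => [|a IH] /=.
  apply/matrixP => i j; have Hj : j = 0 := ord1 j; subst j.
  by rewrite !mxE expr0 mul1r.
rewrite map_mxM -/Wc mulmxA PWc -mulmxA IH.
apply/matrixP => i j; have Hj : j = 0 := ord1 j; subst j.
rewrite mul_diag_mx !mxE exprS mulrA.
by [].
Qed.

Lemma PtP : (P ^t* )%sesqui *m P = 1%:M.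
Proof. by rewrite -invmx_unitary ?PU // mulVmx ?Punit. Qed.

Lemma toC_dotv (a b : 'cV[R]_N) :
  toC (dotv a b) = ((map_mx toC a)^T *m map_mx toC b) 0 0.
Proof.
rewrite /dotv !mxE rmorph_sum; apply: eq_bigr => k _.
by rewrite rmorphM !mxE.
Qed.


Lemma toC_dotvP (a b : 'cV[R]_N) :
  toC (dotv a b) = \sum_i ((P *m map_mx toC a) i 0)^* * (P *m map_mx toC b) i 0.
Proof.
rewrite toC_dotv.
have -> : (map_mx toC a)^T *m map_mx toC b =
   ((map_mx toC a)^T *m (P ^t* )%sesqui) *m (P *m map_mx toC b).
  by rewrite mulmxA -(mulmxA _ (P ^t* )%sesqui) PtP mulmx1.
rewrite mxE; apply: eq_bigr => i _; congr (_ * _).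
rewrite !mxE rmorph_sum; apply: eq_bigr => j _.
rewrite rmorphM mulrC; congr (_ * _).
  by rewrite mxE mxE.
rewrite mxE mxE; symmetry; apply: conj_Creal.
by apply/complex_realP; exists (a j 0).
Qed.


Lemma spec_rep (v : 'cV[R]_N) a b :
  toC (dotv (iter a (mulmx W) v) (iter b (mulmx W) v)) =
  \sum_i (X 0 i)^+(a+b) * ((zc v i 0)^* * zc v i 0).
Proof.
have cr : forall (x y : C) k, x \is Num.real -> (x ^+ k * y)^* = x ^+ k * y^*.
  move=> x y k xr; rewrite rmorphM rmorphXn; congr (_ * _); congr (_ ^+ _).
  exact: conj_Creal.
rewrite toC_dotvP !iter_P; apply: eq_bigr => i _; rewrite !mxE cr ?Xreal //.
rewrite exprD; ring.
Qed.

Definition Xr i := complex.Re (X 0 i).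
Definition cr v i := complex.Re ((zc v i 0)^* * zc v i 0).

Lemma cr_ge0 v i : 0 <= cr v i.
Proof.
rewrite -ler0c /cr RRe_real; last by apply: ger0_real; rewrite mulrC mul_conjC_ge0.
by rewrite mulrC mul_conjC_ge0.
Qed.

Lemma spec_real (v : 'cV[R]_N) a b :
  dotv (iter a (mulmx W) v) (iter b (mulmx W) v) = \sum_i Xr i ^+ (a + b) * cr v i.
Proof.
apply: (@complexI R); rewrite spec_rep rmorph_sum; apply: eq_bigr => i _.
rewrite rmorphM rmorphXn /Xr /cr; congr (_ ^+ _ * _); symmetry; apply: RRe_real.
  exact: Xreal.
by apply: ger0_real; rewrite mulrC mul_conjC_ge0.
Qed.


Lemma Xeig i : eigenvalue W (Xr i).
Proof.
have ec : eigenvalue Wc (X 0 i).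
  apply/eigenvalueP; exists (row i P).
    rewrite -row_mul PWc; apply/matrixP => k j.
    by rewrite mul_diag_mx !mxE.
  apply/eqP => h0.
  have := unitarymxP PU.
  move=> /(congr1 (row i)); rewrite row_mul h0 mul0mx => /matrixP /(_ 0 i).
  by rewrite !mxE eqxx /= => /eqP; rewrite eq_sym oner_eq0.
rewrite eigenvalue_root_char.
rewrite eigenvalue_root_char /Wc -map_char_poly in ec.
rewrite -(fmorph_root (real_complex R)).
have e : toC (Xr i) = X 0 i by rewrite /Xr RRe_real //; exact: Xreal.
by move: ec; rewrite -e.
Qed.

End Spectral.

Section Spec2.
Variables (R : realType) (N : nat) (W : 'M[R]_N).
Hypothesis Wsym : W^T = W.
Hypothesis Wpsd : forall x : 'cV[R]_N, 0 <= dotv x (W *m x).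

Lemma eig_ge0 r : eigenvalue W r -> 0 <= r.
Proof.
move=> /eigenvalueP [v hv v0].
pose u := v^T.
have Wu : W *m u = r *: u by rewrite /u -{1}Wsym -trmx_mul hv linearZ.
have := Wpsd u; rewrite Wu dotvZr.
have upos : 0 < dotv u u.
  rewrite lt_neqAle dotvv_ge0 andbT; apply/eqP => /esym /dotvv_eq0 u0.
  by move: v0; rewrite -(trmxK v) -/u u0 trmx0 eqxx.
by rewrite pmulr_lge0.
Qed.

Lemma specA lmax : (forall a, eigenvalue W a -> a <= lmax) ->
  forall h : 'cV[R]_N, sqnorm (W *m h) <= lmax * dotv h (W *m h).
Proof.
move=> hl h.
have e1 := spec_real Wsym h 1 1.
have e2 := spec_real Wsym h 0 1.
rewrite /= in e1 e2; rewrite /sqnorm e1 e2 mulr_sumr; apply: ler_sum => i _.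
have x0 := eig_ge0 (Xeig Wsym i); have xl := hl _ (Xeig Wsym i).
have c0 := cr_ge0 W h i.
set x := Xr W i in x0 xl *; set c := cr W h i in c0 *.
rewrite add0n expr1 -subr_ge0.
have -> : lmax * (x * c) - x ^+ (1 + 1) * c = x * c * (lmax - x) by rewrite addn1 expr2; ring.
by apply: mulr_ge0; [apply: mulr_ge0 | rewrite subr_ge0].
Qed.

Lemma specB lminp : 0 < lminp ->
  (forall a, eigenvalue W a -> 0 < a -> lminp <= a) ->
  forall z : 'cV[R]_N,
  dotv (W *m z) (W *m (W *m z)) <= sqnorm (W *m (W *m z)) / lminp.
Proof.
move=> l0 hl z.
have e1 := spec_real Wsym z 1 2.
have e2 := spec_real Wsym z 2 2.
rewrite /= in e1 e2; rewrite /sqnorm e1 e2 mulr_suml; apply: ler_sum => i _.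
have x0 := eig_ge0 (Xeig Wsym i).
have c0 := cr_ge0 W z i.
set x := Xr W i in x0 *; set c := cr W z i in c0 *.
have [xz|xp] := eqVneq x 0.
  by rewrite xz !expr0n /= !mul0r.
have xpos : 0 < x by rewrite lt_neqAle eq_sym xp.
have lx := hl _ (Xeig Wsym i) xpos; rewrite -/x in lx.
rewrite -subr_ge0.
have -> : x ^+ (2 + 2) * c / lminp - x ^+ (1 + 2) * c = x ^+ 3 * c * ((x - lminp) / lminp).
  by rewrite /=; field; rewrite gt_eqF.
apply: mulr_ge0; first by apply: mulr_ge0 => //; apply: exprn_ge0.
by apply: divr_ge0; [rewrite subr_ge0 | apply: ltW].
Qed.

End Spec2.

Section Scalar.
Variable R : realType.

Lemma final_comb (eta theta c alpha k delta T L : R)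
  (Pe Pn A2 Bg Cg Df Dfn Dg Dgs Q Qn U Un Bb Gb Z : R) :
  0 < eta -> 0 < theta -> 0 <= c -> 0 <= delta -> 0 <= k -> 0 <= T ->
  Pn / eta = Pe / eta - 2 * Gb - alpha * Pn - alpha * Bg + alpha * Cg - A2 / eta - Z ->
  Qn / theta - c * eta * Un <= Q / theta - c * eta * U + Z ->
  - (2 * Gb) <= - Dg - 2 * Dgs + k * Df - (k + 1) * Dfn + A2 / (2 * eta) ->
  Bb <= 2 * L * Dgs ->
  alpha * Cg <= Dg + Dgs ->
  0 <= Dfn -> 0 <= Pn -> 0 <= Un -> 0 <= A2 -> 0 <= Bb -> 0 <= Bg -> 0 <= alpha -> 0 <= Dgs ->
  delta * Qn / theta <= T * Un ->
  Un <= 2 * A2 / (eta ^+ 2) + 4 * Bb + 4 * alpha ^+ 2 * Bg ->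
  delta / eta <= alpha / 2 ->
  delta * k <= 1 ->
  T <= eta / 4 ->
  8 * T * L <= 1 ->
  eta * alpha <= 1 ->
  (1 + delta) * (Pn / eta + (Qn / theta - c * eta * Un) + k * Dfn)
   <= Pe / eta + (Q / theta - c * eta * U) + k * Df.
Proof.
move=> e0 t0 c0 d0 k0 T0 H1 H2 H3 H4 H5 Dfn0 Pn0 Un0 A20 Bb0 Bg0 al0 Dgs0 H7 H8 F1 F2 F3 F4 F5.
have ceU : 0 <= c * eta * Un by apply: mulr_ge0 => //; apply: mulr_ge0 => //; apply: ltW.
have i1 : delta * (Pn / eta) <= alpha / 2 * Pn.
  have -> : delta * (Pn / eta) = (delta / eta) * Pn by ring.
  by apply: ler_wpM2r.
have i2 : delta * (k * Dfn) <= Dfn.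
  have -> : delta * (k * Dfn) = (delta * k) * Dfn by ring.
  by rewrite -[X in _ <= X]mul1r; apply: ler_wpM2r.
have i3 : delta * (c * eta * Un) >= 0 by apply: mulr_ge0.
have i4 : T * Un <= T * (2 * A2 / (eta ^+ 2) + 4 * Bb + 4 * alpha ^+ 2 * Bg).
  by apply: ler_wpM2l.
have i5 : T * (2 * A2 / eta ^+ 2) <= A2 / (2 * eta).
  have -> : T * (2 * A2 / eta ^+ 2) = T * (2 / eta ^+ 2) * A2 by ring.
  have -> : A2 / (2 * eta) = (eta / 4) * (2 / eta ^+ 2) * A2.
    by field; rewrite gt_eqF.
  apply: ler_wpM2r => //; apply: ler_wpM2r => //.
  by apply: divr_ge0 => //; apply: exprn_ge0; apply: ltW.
have i6 : T * (4 * Bb) <= Dgs.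
  have a : T * (4 * Bb) <= T * (4 * (2 * L * Dgs)).
    by apply: ler_wpM2l => //; apply: ler_wpM2l.
  have b : 8 * T * L * Dgs <= Dgs.
    by rewrite -[X in _ <= X]mul1r; apply: ler_wpM2r.
  have e : T * (4 * (2 * L * Dgs)) = 8 * T * L * Dgs by ring.
  lra.
have i7 : T * (4 * alpha ^+ 2 * Bg) <= alpha * Bg.
  have : T * (4 * alpha ^+ 2 * Bg) <= eta / 4 * (4 * alpha ^+ 2 * Bg).
    apply: ler_wpM2r => //; apply: mulr_ge0 => //; apply: mulr_ge0 => //.
    exact: exprn_ge0.
  move/le_trans; apply.
  have -> : eta / 4 * (4 * alpha ^+ 2 * Bg) = (eta * alpha) * (alpha * Bg) by field.
  by rewrite -[X in _ <= X]mul1r; apply: ler_wpM2r => //; apply: mulr_ge0.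
have i8 : delta * (Qn / theta - c * eta * Un) <= T * Un.
  have -> : delta * (Qn / theta - c * eta * Un) = delta * Qn / theta - delta * (c * eta * Un) by ring.
  lra.
have e4 : T * (2 * A2 / (eta ^+ 2) + 4 * Bb + 4 * alpha ^+ 2 * Bg) =
  T * (2 * A2 / eta ^+ 2) + T * (4 * Bb) + T * (4 * alpha ^+ 2 * Bg) by ring.
have E1 : Pn / eta + (Qn / theta - c * eta * Un) + k * Dfn + Dfn
  <= Pe / eta + (Q / theta - c * eta * U) + k * Df - alpha * Pn - alpha * Bg + alpha * Cg
     - Dg - 2 * Dgs - A2 / (2 * eta).
  have : A2 / eta = A2 / (2 * eta) + A2 / (2 * eta) by field; rewrite gt_eqF.
  lra.
have -> : (1 + delta) * (Pn / eta + (Qn / theta - c * eta * Un) + k * Dfn) =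
  (Pn / eta + (Qn / theta - c * eta * Un) + k * Dfn) +
  (delta * (Pn / eta) + delta * (Qn / theta - c * eta * Un) + delta * (k * Dfn)) by ring.
have : 0 <= alpha * Pn by apply: mulr_ge0.
lra.
Qed.
End Scalar.

Section Params.
Variable R : realType.

Lemma params_core (mu L chi A B delta tau : R) :
  0 < mu -> mu <= L -> 1 <= chi -> 0 <= A -> 0 <= B ->
  A * A * L = mu * chi -> A = B * chi -> 0 <= delta -> delta <= B / 4 -> delta * chi <= 4^-1 ->
  (tau = 1 /\ 2 <= A) \/ (tau = A / 2 /\ A < 2) ->
  [/\ 0 < tau, tau <= 1, delta * (4 * tau * L) <= mu / 2,
      delta * (2 * (1 - tau) / tau) <= 1 & (2 * delta * chi <= tau /\ mu <= 4 * tau * L)].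
Proof.
move=> mu0 muL chi1 A0 B0 AA AB d0 dB dchi [[-> A2]|[-> A2]].
  split; [lra | lra | | | ].
  - have L0 : 0 < L by lra.
    have h4 : A * A >= 4.
      have : 0 <= (A - 2) * (A + 2) by apply: mulr_ge0; lra.
      lra.
    have : A * A * L >= 4 * L by rewrite ler_pM2r.
    rewrite AA => h.
    have : 8 * L * (delta * chi) <= 2 * L by nra.
    nra.
  - by rewrite subrr mulr0 mul0r mulr0 ler01.
  - split; lra.
have L0 : 0 < L by lra.
have Apos : 0 < A.
  rewrite lt_neqAle A0 andbT; apply/eqP => A00.
  by move: AA; rewrite -A00 !mul0r => /esym/eqP; rewrite mulf_eq0 !gt_eqF //= ?ltr01 //; lra.
split; [lra | lra | | | ].
- have e : A * B * L * chi = mu * chi.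
    by rewrite -AA {2}AB; ring.
  have e2 : A * B * L = mu.
    by apply: (mulIf (x := chi)); [rewrite gt_eqF //; lra | ].
  have : delta * (A * L) <= B / 4 * (A * L) by apply: ler_wpM2r => //; nra.
  nra.
- have h : 4 * delta <= A by nra.
  have -> : delta * (2 * (1 - A / 2) / (A / 2)) = 4 * delta * (1 - A / 2) / A.
    by field; rewrite gt_eqF.
  rewrite ler_pdivrMr //; nra.
- split; first by nra.
  have : A * L >= mu by nra.
  lra.
Qed.

End Params.

Section Params2.
Variable R : realType.

Lemma params_all (mu L lmax lminp : R) :
  0 < mu -> mu <= L -> 0 < lminp -> lminp <= lmax ->
  let tau := Num.min 1 (2^-1 * Num.sqrt (mu / L * (lmax / lminp))) in
  let eta := (4 * tau * L)^-1 in
  let theta := (eta * lmax)^-1 in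
  let delta := 4^-1 * Num.min (Num.sqrt (mu / L * (lminp / lmax))) (lminp / lmax) in
  [/\ 0 < tau, tau <= 1, 0 < eta, 0 < theta & [/\ 0 <= delta, delta / eta <= mu / 2,
     delta * (2 * (1 - tau) / tau) <= 1,
     delta / theta / lminp <= eta / 4 &
     [/\ 8 * (delta / theta / lminp) * L <= 1, eta * mu <= 1 & theta^-1 = eta * lmax]]].
Proof.
move=> mu0 muL l0 ll tau eta theta delta.
have L0 : 0 < L by lra.
have lmax0 : 0 < lmax by lra.
set chi := lmax / lminp.
have chi1 : 1 <= chi by rewrite /chi ler_pdivlMr // mul1r.
have chi0 : 0 < chi by lra.
have ichi : lminp / lmax = chi^-1 by rewrite /chi invf_div.
set A := Num.sqrt (mu / L * chi).
set B := Num.sqrt (mu / L * (lminp / lmax)).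
have A0 : 0 <= A by apply: sqrtr_ge0.
have B0 : 0 <= B by apply: sqrtr_ge0.
have r0 : 0 <= mu / L by apply: divr_ge0; apply: ltW.
have AA : A * A * L = mu * chi.
  rewrite -expr2 sqr_sqrtr; last by apply: mulr_ge0 => //; apply: ltW.
  by field; rewrite gt_eqF.
have AB : A = B * chi.
  have sA : A ^+ 2 = mu / L * chi.
    by rewrite sqr_sqrtr //; apply: mulr_ge0 => //; apply: ltW.
  have sB : B ^+ 2 = mu / L * chi^-1.
    by rewrite sqr_sqrtr ichi //; apply: mulr_ge0 => //; rewrite invr_ge0 ltW.
  apply/eqP; rewrite -(@eqrXn2 _ 2 A (B * chi)) //; last by apply: mulr_ge0 => //; apply: ltW.
  by rewrite exprMn sA sB; apply/eqP; field; rewrite !gt_eqF.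
have d0 : 0 <= delta.
  by apply: mulr_ge0; [rewrite invr_ge0 | rewrite le_min B0 ichi invr_ge0 ltW].
have dB : delta <= B / 4 by rewrite /delta mulrC ler_wpM2r ?invr_ge0 // ge_min lexx.
have dchi : delta * chi <= 4^-1.
  have : delta <= 4^-1 * chi^-1.
    by rewrite /delta ler_wpM2l ?invr_ge0 // ge_min -ichi lexx orbT.
  move=> h; apply: le_trans (ler_wpM2r (ltW chi0) h) _.
  by rewrite -mulrA mulVf ?gt_eqF // mulr1.
have ht : (tau = 1 /\ 2 <= A) \/ (tau = A / 2 /\ A < 2).
  rewrite /tau -/A; case: (leP 1 (2^-1 * A)) => h; [left | right]; split => //; lra.
have [t0 t1 G1 G2 [G3 G4]] := params_core mu0 muL chi1 A0 B0 AA AB d0 dB dchi ht.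
have e0 : 0 < eta by rewrite invr_gt0; apply: mulr_gt0 => //; apply: mulr_gt0.
have th0 : 0 < theta by rewrite invr_gt0; apply: mulr_gt0.
have ith : theta^-1 = eta * lmax by rewrite invrK.
have eT : delta / theta / lminp = (delta * chi) * eta.
  by rewrite ith /chi; field; rewrite !gt_eqF.
have t0' : 0 < 4 * tau * L by apply: mulr_gt0 => //; apply: mulr_gt0.
split => //; split => //.
- by rewrite /eta invrK.
- by rewrite eT mulrC ler_wpM2l // ltW.
split => //.
- rewrite eT.
  have -> : 8 * (delta * chi * eta) * L = (2 * delta * chi) / tau.
    by rewrite /eta; field; rewrite !gt_eqF.
  by rewrite ler_pdivrMr // mul1r.
- rewrite /eta.
  by rewrite mulrC ler_pdivrMr // mul1r.
Qed.
End Params2.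

Section Range.
Variables (R : realType) (N : nat) (W : 'M[R]_N).
Hypothesis Wsym : W^T = W.

Lemma in_rangeD u v : in_range W u -> in_range W v -> in_range W (u + v).
Proof. by move=> [a ->] [b ->]; exists (a + b); rewrite mulmxDr. Qed.

Lemma in_rangeZ (t : R) u : in_range W u -> in_range W (t *: u).
Proof. by move=> [a ->]; exists (t *: a); rewrite scalemxAr. Qed.

Lemma in_rangeN u : in_range W u -> in_range W (- u).
Proof. by move=> h; rewrite -scaleN1r; apply: in_rangeZ. Qed.

Lemma in_rangeW x : in_range W (W *m x).
Proof. by exists x. Qed.

Lemma dot_range_ker u k : in_range W u -> in_ker W k -> dotv u k = 0.
Proof.
move=> [z ->] hk; rewrite dotvC dotv_mul //.
by rewrite hk dotv0l.
Qed.

End Range.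

Section Grad.
Variables (R : realType) (N : nat).
Variables (F : 'cV[R]_N -> R) (g : 'cV[R]_N -> 'cV[R]_N) (mu L : R) (W : 'M[R]_N) (xs : 'cV[R]_N).
Hypothesis mu0 : 0 < mu.
Hypothesis L0 : 0 < L.
Hypothesis hsc : strongly_convex F g mu.
Hypothesis hsm : smooth g L.
Hypothesis Wsym : W^T = W.
Hypothesis hxs : in_ker W xs.
Hypothesis hmin : forall x, in_ker W x -> F xs <= F x.

Lemma grad_orth k : in_ker W k -> dotv (g xs) k = 0.
Proof.
move=> hk.
set p := dotv (g xs) k; set q := sqnorm k.
have q0 : 0 <= q by apply: dotvv_ge0.
have Lq : 0 < L * q + 1 by have := mulr_ge0 (ltW L0) q0; lra.
set t := - p / (L * q + 1).
have hker : in_ker W (xs + t *: k).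
  by rewrite /in_ker mulmxDr -scalemxAr hxs hk scaler0 addr0.
have h1 := descent mu0 L0 hsc hsm xs (t *: k).
have h2 := hmin hker.
rewrite dotvZr /sqnorm dotvZl dotvZr -/p in h1; rewrite -/(sqnorm k) -/q in h1.

have h3 : 0 <= t * p + L / 2 * (t * (t * q)) by lra.
have h4 : 0 <= (t * p + L / 2 * (t * (t * q))) * (L * q + 1) ^+ 2.
  by apply: mulr_ge0 => //; apply: exprn_ge0; apply: ltW.
have e : (t * p + L / 2 * (t * (t * q))) * (L * q + 1) ^+ 2 = - (p ^+ 2) * (L * q / 2 + 1).
  by rewrite /t; field; rewrite gt_eqF.
rewrite e in h4.
have Lq2 : 0 < L * q / 2 + 1 by have := mulr_ge0 (ltW L0) q0; lra.
have : p ^+ 2 <= 0.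
  have h5 : 0 <= - (p ^+ 2) by move: h4; rewrite pmulr_lge0.
  by rewrite -oppr_ge0.
by rewrite le_eqVlt ltNge sqr_ge0 orbF sqrf_eq0 => /eqP.
Qed.

Lemma grad_range : in_range W (g xs).
Proof.
pose r := (g xs)^T.
have : (r <= W)%MS.
  rewrite submxE; apply/eqP/matrixP => i j; rewrite (ord1 i) [RHS]mxE.
  have hk : in_ker W (col j (cokermx W)).
    by rewrite /in_ker colE mulmxA mulmx_coker mul0mx.
  have := grad_orth hk; rewrite /dotv => <-.
  by rewrite !mxE; apply: eq_bigr => k _; rewrite !mxE.
move/submxP => [D hD].
exists D^T; by rewrite -{1}Wsym -trmx_mul -hD /r trmxK.
Qed.

End Grad.

Section Ident.
Variables (R : realType) (N : nat).
Implicit Types (e d q b w u v h : 'cV[R]_N).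

Lemma idH1 e d q b w (eta mu : R) : eta != 0 -> d = - eta *: (b + mu *: q + w) ->
  sqnorm (e + d) / eta = sqnorm e / eta - 2 * dotv b (e + d) - mu * sqnorm (e + d)
    - mu * sqnorm q + mu * sqnorm (e + d - q) - sqnorm d / eta - 2 * dotv w (e + d).
Proof.
move=> e0 hd.
have hw : w = - eta^-1 *: d - b - mu *: q.
  rewrite hd; apply/matrixP => i j; rewrite !mxE; field.
  by [].
rewrite hw /sqnorm.
rewrite !(dotvDl, dotvDr, dotvBl, dotvBr, dotvZl, dotvZr, dotvNl, dotvNr).
rewrite ?(dotvC e d) ?(dotvC e q) ?(dotvC d q) ?(dotvC e b) ?(dotvC d b) ?(dotvC q b).
by field.
Qed.

End Ident.

Section Ident2.
Variables (R : realType) (N : nat).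
Implicit Types (e d q b w u v h : 'cV[R]_N).

Lemma idH2 (Wd : 'M[R]_N) u v h (theta c eta : R) : theta != 0 ->
  dotv (Wd *m u) v = dotv u h -> dotv (Wd *m v) u = dotv h u ->
  dotv (Wd *m v) v = dotv v h ->
  theta^-1 * dotv (Wd *m (u + theta *: v)) (u + theta *: v) - c * eta * sqnorm (u + theta *: v) =
  theta^-1 * dotv (Wd *m u) u - c * eta * sqnorm u
  + 2 * dotv (u + theta *: v) (h - (c * eta * theta) *: v)
  + c * eta * theta ^+ 2 * sqnorm v - theta * dotv v h.
Proof.
move=> t0 h1 h2 h3.
rewrite mulmxDr -scalemxAr /sqnorm.
rewrite !(dotvDl, dotvDr, dotvBl, dotvBr, dotvZl, dotvZr, dotvNl, dotvNr).
rewrite h1 h2 h3 ?(dotvC h u) ?(dotvC v u) ?(dotvC h v).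
by field.
Qed.

Lemma idH8 d b q w (eta mu : R) : eta != 0 -> d = - eta *: (b + mu *: q + w) ->
  sqnorm w <= 2 * sqnorm d / eta ^+ 2 + 4 * sqnorm b + 4 * mu ^+ 2 * sqnorm q.
Proof.
move=> e0 hd.
have hw : w = - eta^-1 *: d + (- b + (- mu) *: q).
  rewrite hd; apply/matrixP => i j; rewrite !mxE; field.
  by [].
rewrite hw /sqnorm.
apply: le_trans (sq_add2 _ _) _.
have h2 := sq_add2 (- b) ((- mu) *: q).
rewrite !(dotvZl, dotvZr, dotvNl, dotvNr) in h2 *.
have e1 : - eta^-1 * (- eta^-1 * dotv d d) = dotv d d / eta ^+ 2 by field.
have e2 : - mu * (- mu * dotv q q) = mu ^+ 2 * dotv q q by ring.
lra.
Qed.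

End Ident2.

Section Acc.
Variables (R : realType) (N : nat).
Variables (F : 'cV[R]_N -> R) (g : 'cV[R]_N -> 'cV[R]_N) (mu L : R).
Hypothesis mu0 : 0 < mu.
Hypothesis L0 : 0 < L.
Hypothesis hsc : strongly_convex F g mu.
Hypothesis hsm : smooth g L.

Lemma acc_ineq (xs xg xf xfn xn x : 'cV[R]_N) (tau eta : R) :
  0 < tau -> tau <= 1 -> 0 < eta -> eta * (4 * tau * L) = 1 ->
  xg = tau *: x + (1 - tau) *: xf ->
  xfn = xg + (2 * tau / (2 - tau)) *: (xn - x) ->
  - (2 * dotv (g xg - g xs) (xn - xs)) <=
  - bregman F g xg xs - 2 * bregman F g xs xg + (2 * (1 - tau) / tau) * bregman F g xf xs
  - (2 * (1 - tau) / tau + 1) * bregman F g xfn xs + sqnorm (xn - x) / (2 * eta).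
Proof.
move=> t0 t1 e0 heta hxg hxfn.
have t2 : 2 - tau != 0 by rewrite gt_eqF //; lra.
have V1 : xn - xs = (xg - xs) + ((1 - tau) / tau) *: (xg - xf) + (xn - x).
  by rewrite hxg; apply/matrixP => i j; rewrite !mxE; field; rewrite gt_eqF.
set k2 := 2 * tau / (2 - tau).
have k20 : 0 < k2 by rewrite /k2; apply: divr_gt0; lra.
set b := g xg - g xs.
set A2 := sqnorm (xn - x).
have A20 : 0 <= A2 by apply: dotvv_ge0.
have I0 : dotv b (xg - xs) = bregman F g xg xs + bregman F g xs xg.
  rewrite /b /bregman !(dotvBl, dotvBr); ring.
have I1 : - dotv b (xg - xf) <= bregman F g xf xs - bregman F g xg xs.
  have := convex1 mu0 hsc xg xf.
  rewrite /b /bregman !(dotvBl, dotvBr); lra.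
have I2 : bregman F g xfn xs - bregman F g xg xs - L / 2 * (k2 * (k2 * A2)) <= k2 * dotv b (xn - x).
  have := descent mu0 L0 hsc hsm xg (k2 *: (xn - x)).
  rewrite -/k2 -hxfn /sqnorm !dotvZl !dotvZr -/(sqnorm (xn - x)) -/A2 => H.
  have E : xfn - xs = (xg - xs) + k2 *: (xn - x) by rewrite hxfn addrAC.
  rewrite !(dotvBl, dotvBr) in H.
  rewrite /b /bregman E !(dotvBl, dotvBr, dotvDr, dotvZr); lra.
rewrite V1 dotvDr dotvDr dotvZr I0.
set k := 2 * (1 - tau) / tau.
have k0 : 0 <= k by rewrite /k; apply: divr_ge0; lra.
have hk : k + 1 = 2 / k2 by rewrite /k /k2; field; rewrite t2 gt_eqF.
have I1' : - (k * dotv b (xg - xf)) <= k * (bregman F g xf xs - bregman F g xg xs).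
  by rewrite -mulrN; apply: ler_wpM2l.
have I2' : 2 / k2 * (bregman F g xfn xs - bregman F g xg xs - L / 2 * (k2 * (k2 * A2)))
    <= 2 * dotv b (xn - x).
  have -> : 2 * dotv b (xn - x) = 2 / k2 * (k2 * dotv b (xn - x)) by field; rewrite gt_eqF.
  by apply: ler_wpM2l => //; apply: divr_ge0 => //; apply: ltW.
have ek : 2 * ((1 - tau) / tau) = k by rewrite /k; ring.
have eA : 2 / k2 * (L / 2 * (k2 * (k2 * A2))) = L * k2 * A2 by field; rewrite gt_eqF.
have hA : L * k2 * A2 <= A2 / (2 * eta).
  have -> : A2 / (2 * eta) = (2 * tau * L) * A2.
    have -> : A2 / (2 * eta) = A2 * (eta * (4 * tau * L)) / (2 * eta) by rewrite heta mulr1.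
    by field; rewrite gt_eqF.
  apply: ler_wpM2r => //.
  have hk2 : k2 <= 2 * tau.
    rewrite /k2 ler_pdivrMr; last by lra.
    nra.
  have : L * k2 <= L * (2 * tau) by apply: ler_wpM2l => //; apply: ltW.
  lra.

have : 2 / k2 * (bregman F g xfn xs - bregman F g xg xs - L / 2 * (k2 * (k2 * A2)))
   = (k + 1) * bregman F g xfn xs - (k + 1) * bregman F g xg xs - L * k2 * A2.
  by rewrite -eA hk; ring.
move=> e3; rewrite e3 in I2'.
have e6 : 2 * ((1 - tau) / tau * dotv b (xg - xf)) = k * dotv b (xg - xf) by rewrite /k; ring.
lra.
Qed.

End Acc.
Section Step.
Variables (R : realType) (N : nat).
Variables (F : 'cV[R]_N -> R) (g : 'cV[R]_N -> 'cV[R]_N) (mu L : R)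
  (W Wdag : 'M[R]_N) (lmax lminp : R) (xs : 'cV[R]_N).
Hypothesis mu0 : 0 < mu.
Hypothesis L0 : 0 < L.
Hypothesis hsc : strongly_convex F g mu.
Hypothesis hsm : smooth g L.
Hypothesis Wsym : W^T = W.
Hypothesis Wpsd : forall x, 0 <= dotv x (W *m x).
Hypothesis hlmax : forall a, eigenvalue W a -> a <= lmax.
Hypothesis l0 : 0 < lminp.
Hypothesis hlm : forall a, eigenvalue W a -> 0 < a -> lminp <= a.
Hypothesis hWd : forall u, in_range W u -> in_range W (Wdag *m u) /\ W *m (Wdag *m u) = u.
Hypothesis hxs : in_ker W xs.
Hypothesis hys : in_range W (g xs).
Variables (tau eta theta delta : R).
Hypotheses (t0 : 0 < tau) (t1 : tau <= 1) (e0 : 0 < eta) (th0 : 0 < theta) (d0 : 0 <= delta)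
  (F1 : delta / eta <= mu / 2) (F2 : delta * (2 * (1 - tau) / tau) <= 1)
  (F3 : delta / theta / lminp <= eta / 4) (F4 : 8 * (delta / theta / lminp) * L <= 1)
  (F5 : eta * mu <= 1) (ith : theta^-1 = eta * lmax) (heta : eta * (4 * tau * L) = 1).

Lemma Wdag_bound u : in_range W u -> dotv (Wdag *m u) u <= sqnorm u / lminp.
Proof.
move=> hu; have [[z hz] hW] := hWd hu.
rewrite hz in hW *; rewrite -hW.
exact: specB.
Qed.

Lemma WdagW u h : in_range W u -> dotv (Wdag *m u) (W *m h) = dotv u h.
Proof. by move=> hu; rewrite dotv_mul // (hWd hu).2. Qed.

Lemma psi_dual_exp (a b : R) u :
  dotv ((a *: Wdag - b *: 1%:M) *m u) u = a * dotv (Wdag *m u) u - b * sqnorm u.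
Proof. by rewrite mulmxBl -!scalemxAl mul1mx dotvBl !dotvZl. Qed.

Lemma step_main x y xf : in_range W y ->
  (1 + delta) * Psi F g Wdag eta theta mu tau xs (- g xs)
                  (apapc_step g W eta theta mu tau (State x y xf))
  <= Psi F g Wdag eta theta mu tau xs (- g xs) (State x y xf).
Proof.
move=> hy.
rewrite /Psi /apapc_step /= !psi_dual_exp.
set xg := tau *: x + (1 - tau) *: xf.
set c := (1 + eta * mu)^-1.
set xh := c *: (x - eta *: (g xg - mu *: xg + y)).
set v := W *m xh.
set y' := y + theta *: v.
set x' := c *: (x - eta *: (g xg - mu *: xg + y')).
set k2 := 2 * tau / (2 - tau).
set xf' := xg + k2 *: (x' - x).
have emu : 0 <= eta * mu by apply: mulr_ge0; apply: ltW.
have c1 : 1 + eta * mu != 0 by rewrite gt_eqF //; lra.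
have c0 : 0 < c by rewrite invr_gt0; lra.
have cle1 : c <= 1 by rewrite invf_le1; lra.
set u := y - - g xs.
set u' := y' - - g xs.
have hu : in_range W u by apply: in_rangeD => //; apply/in_rangeN/in_rangeN.
have hv : in_range W v by apply: in_rangeW.
have hu' : u' = u + theta *: v.
  by rewrite /u' /u /y'; apply/matrixP => i j; rewrite !mxE; ring.
have hu'r : in_range W u' by rewrite hu'; apply: in_rangeD => //; apply: in_rangeZ.
set h := xh - xs.
have hvh : v = W *m h by rewrite /h mulmxBr hxs subr0.
have hxh : x' - xs = h - (c * eta * theta) *: v.
  by rewrite /h /x' /xh /y'; apply/matrixP => i j; rewrite !mxE; ring.
have VX : x' - x = - eta *: ((g xg - g xs) + mu *: (x' - xg) + u').
  apply/matrixP => i j; rewrite /x' /u' /c !mxE; field; exact: c1.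
have ene : eta != 0 by rewrite gt_eqF.
have H1 := idH1 (x - xs) ene VX.
have Ve : x' - xs = (x - xs) + (x' - x) by apply/matrixP => i j; rewrite !mxE; ring.
have Vg : xg - xs = (x' - xs) - (x' - xg) by apply/matrixP => i j; rewrite !mxE; ring.
rewrite -Ve -Vg in H1.
have f1 : dotv (Wdag *m u) v = dotv u h by rewrite hvh; exact: WdagW.
have f2 : dotv (Wdag *m v) u = dotv h u.
  have [z hz] := hu.
  rewrite [X in dotv _ X]hz WdagW // hvh -dotv_mul // -hz.
  by [].
have f3 : dotv (Wdag *m v) v = dotv v h by rewrite [X in dotv _ X]hvh WdagW.
have tne : theta != 0 by rewrite gt_eqF.
have H2e := idH2 c eta tne f1 f2 f3.
rewrite -hu' -hxh in H2e.
have S1 : c * eta * theta ^+ 2 * sqnorm v <= theta * dotv v h.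
  have sa := specA Wsym Wpsd hlmax h.
  rewrite -hvh in sa.
  have p0 : 0 <= dotv h v by rewrite hvh.
  rewrite (dotvC v h).
  have e1 : eta * lmax * theta = 1 by rewrite -ith mulVf // gt_eqF.
  have : c * eta * theta ^+ 2 * sqnorm v <= c * eta * theta ^+ 2 * (lmax * dotv h v).
    apply: ler_wpM2l => //; apply: mulr_ge0; [apply: mulr_ge0; apply: ltW => // | ].
    by apply: exprn_ge0; apply: ltW.
  have -> : c * eta * theta ^+ 2 * (lmax * dotv h v) = c * theta * dotv h v * (eta * lmax * theta).
    by ring.
  rewrite e1 mulr1 => H.
  apply: le_trans H _.
  rewrite -mulrA [X in _ <= X]mulrC -[X in _ <= X]mul1r mulrA.
  rewrite (mulrC _ theta) -mulrA ler_wpM2r //; last by apply: mulr_ge0 => //; apply: ltW.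
have H2 : theta^-1 * dotv (Wdag *m u') u' - c * eta * sqnorm u' <=
    theta^-1 * dotv (Wdag *m u) u - c * eta * sqnorm u + 2 * dotv u' (x' - xs).
  rewrite H2e; lra.
have H3 := acc_ineq mu0 L0 hsc hsm xs (xn := x') t0 t1 e0 heta (erefl xg) (erefl xf').
have H4 : sqnorm (g xg - g xs) <= 2 * L * bregman F g xs xg.
  have := cocoercive mu0 L0 hsc hsm xs xg.
  have -> : sqnorm (g xs - g xg) = sqnorm (g xg - g xs).
    by rewrite /sqnorm -opprB dotvNl dotvNr opprK.
  rewrite ler_pdivrMr; last by apply: mulr_gt0.
  by rewrite /bregman mulrC.
have H5 : mu * sqnorm (xg - xs) <= bregman F g xg xs + bregman F g xs xg.
  have a1 := hsc xs xg.
  have a2 := hsc xg xs.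
  have e : sqnorm (xs - xg) = sqnorm (xg - xs).
    by rewrite /sqnorm -opprB dotvNl dotvNr opprK.
  rewrite e in a2.
  rewrite /bregman; lra.
have Dfn0 : 0 <= bregman F g xf' xs.
  by have := convex1 mu0 hsc xs xf'; rewrite /bregman; lra.
have Dgs0 : 0 <= bregman F g xs xg.
  by have := convex1 mu0 hsc xg xs; rewrite /bregman; lra.
have H7 : delta * dotv (Wdag *m u') u' / theta <= (delta / theta / lminp) * sqnorm u'.
  have := Wdag_bound hu'r => hb.
  have -> : delta / theta / lminp * sqnorm u' = delta * (sqnorm u' / lminp) / theta by ring.
  apply: ler_wpM2r; first by rewrite invr_ge0 ltW.
  by apply: ler_wpM2l.
have H8 := idH8 ene VX.
have k0 : 0 <= 2 * (1 - tau) / tau.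
  by apply: divr_ge0; [apply: mulr_ge0 => //; rewrite subr_ge0 | apply: ltW].
have T0 : 0 <= delta / theta / lminp.
  by apply: divr_ge0; [apply: divr_ge0 => //; apply: ltW | apply: ltW].
have := final_comb e0 th0 (ltW c0) d0 k0 T0 H1 _ H3 H4 H5 Dfn0 (dotvv_ge0 _) (dotvv_ge0 _)
  (dotvv_ge0 _) (dotvv_ge0 _) (dotvv_ge0 _) (ltW mu0) Dgs0 H7 H8 F1 F2 F3 F4 F5.
move=> fc.
have H2' : dotv (Wdag *m u') u' / theta - c * eta * dotv u' u' <=
   dotv (Wdag *m u) u / theta - c * eta * sqnorm u + 2 * dotv u' (x' - xs).
  by rewrite !(mulrC _ theta^-1); exact: H2.
have := fc _ _ H2'.
rewrite !(mulrC _ theta^-1) !(mulrC _ eta^-1) ?mul1r ?mulr1.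
by [].
Qed.
End Step.

Unset Implicit Arguments.

Theorem mainTheorem8 (R : realType) (n d : nat)
  (F : 'cV[R]_(n * d) -> R) (gradF : 'cV[R]_(n * d) -> 'cV[R]_(n * d))
  (mu L : R) (W Wdag : 'M[R]_(n * d)) (lmax lminp : R)
  (xs x0 y0 : 'cV[R]_(n * d)) :
  has_gradient F gradF ->
  0 < mu -> mu <= L ->
  strongly_convex F gradF mu ->
  smooth gradF L ->
  W^T = W ->
  (forall x, 0 <= dotv x (W *m x)) ->
  (forall x, in_ker W x <-> consensus x) ->
  (* lmax = largest eigenvalue of W, lminp = smallest positive eigenvalue *)
  eigenvalue W lmax -> (forall a, eigenvalue W a -> a <= lmax) ->
  eigenvalue W lminp -> 0 < lminp ->
  (forall a, eigenvalue W a -> 0 < a -> lminp <= a) ->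
  (* Wdag is the inverse of W restricted to range(W) *)
  (forall u, in_range W u -> in_range W (Wdag *m u) /\ W *m (Wdag *m u) = u) ->
  (* xs is the (unique) minimizer of F over ker W *)
  in_ker W xs -> (forall x, in_ker W x -> F xs <= F x) ->
  in_range W y0 ->
  let ys := - gradF xs in
  let tau := Num.min 1 (2^-1 * Num.sqrt (mu / L * (lmax / lminp))) in
  let eta := (4 * tau * L)^-1 in
  let theta := (eta * lmax)^-1 in
  let alpha := mu in
  forall k : nat,
    Psi F gradF Wdag eta theta alpha tau xs ys
        (apapc gradF W eta theta alpha tau x0 y0 k.+1)
    <= (1 + 4^-1 * Num.min (Num.sqrt (mu / L * (lminp / lmax))) (lminp / lmax))^-1
       * Psi F gradF Wdag eta theta alpha tau xs ys
        (apapc gradF W eta theta alpha tau x0 y0 k).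
Proof.
move=> _ mu0 muL hsc hsm Wsym Wpsd _ _ hlmax hlmin l0 hlm hWd hxs hmin hy0.
move=> ys tau eta theta alpha k.
have L0 : 0 < L by apply: lt_le_trans muL.
have ll : lminp <= lmax by apply: hlmax.
have [t0 t1 e0 th0 [d0 F1 F2 F3 [F4 F5 ith]]] := params_all mu0 muL l0 ll.
set delta := 4^-1 * Num.min (Num.sqrt (mu / L * (lminp / lmax))) (lminp / lmax).
have hys : in_range W (gradF xs) := grad_range mu0 L0 hsc hsm Wsym hxs hmin.
have heta : eta * (4 * tau * L) = 1.
  by rewrite /eta mulVf // gt_eqF //; apply: mulr_gt0 => //; apply: mulr_gt0.
have hrange : forall j, in_range W (st_y (apapc gradF W eta theta alpha tau x0 y0 j)).
  elim=> [|j IH] //=.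
  case: (apapc gradF W eta theta alpha tau x0 y0 j) IH => x y xf /= IH.
  by apply: in_rangeD => //; apply: in_rangeZ; apply: in_rangeW.
have := hrange k.
rewrite [apapc _ _ _ _ _ _ _ _ k.+1]/=.
case: (apapc gradF W eta theta alpha tau x0 y0 k) => x y xf /= hy.
have H := step_main mu0 L0 hsc hsm Wsym Wpsd hlmax l0 hlm hWd hxs hys
  t0 t1 e0 th0 d0 F1 F2 F3 F4 F5 ith heta x xf hy.
have dp : 0 < 1 + delta by apply: (lt_le_trans ltr01); rewrite lerDl; exact: d0.
rewrite -(ler_pM2l dp) mulrA mulfV ?gt_eqF // mul1r.
exact: H.
Qed.
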